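(* Let $A$ be a circular $m\times n$ matrix, $b\in\mathbb{Z}_+^m$, $x^*\in Q(A,b)\setminus Q^*(A,b)$, and let $\Gamma$ be a circuit with negative cost in $D(A,x^* )$. Then the $\Gamma$-inequality is violated by $x^*$.
   Context: Notation: $[n]=\{1,\dots,n\}$ with addition mod $n$ (index $0$ identified with $n$); for $a,c\in[n]$ with $t\ge0$ minimal such that $a+t\equiv c\pmod n$, $[a,c)_n=\{a,\dots,a+t-1\}$ (mod $n$). An $m\times n$ $\{0,1\}$-matrix $A$ is circular if for each row $i$ there are $\ell_i\in[n]$ and an integer $2\le k_i\le n-1$ with row $i$ the incidence vector of $[\ell_i,\ell_i+k_i)_n$. $Q(A,b)=\{x\ge0:Ax\ge b\}$, $Q^*(A,b)=\operatorname{conv}(Q(A,b)\cap\mathbb{Z}^n)$. $D(A)$: node set $[n]$ (labels mod $n$); forward arcs $a_i=(\ell_i-1,\ell_i+k_i-1)$ ($i\in[m]$, length $k_i$), $a_{m+j}=(j-1,j)$ ($j\in[n]$, length $1$); reverse arcs $\bar a_i=(\ell_i+k_i-1,\ell_i-1)$ (length $-k_i$), $\bar a_{m+j}=(j,j-1)$ (length $-1$). A circuit is a simple directed circuit; winding number $p(\Gamma)$: $p(\Gamma)n=\sum_{a\in E(\Gamma)}l(a)$. A forward row arc $a_i$ jumps over $j$ iff $j\in[\ell_i,\ell_i+k_i)_n$; $(j-1,j)$ jumps over $j$ only; $\bar a_k$ jumps over $j$ iff $a_k$ does. $p^-(\Gamma,j)$ = number of reverse arcs of $\Gamma$ jumping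 over $j$. $\Gamma$-inequality (for $p(\Gamma)\ne0$): with $t(\Gamma,b)=\sum_{i:a_i\in E(\Gamma)}b_i-\sum_{i:\bar a_i\in E(\Gamma)}b_i$, $\beta=\lfloor t(\Gamma,b)/p(\Gamma)\rfloor$, $r=t(\Gamma,b)-\beta p(\Gamma)$, it is $\sum_{j\in[n]}[p^-(\Gamma,j)+r]x_j\ge r(\beta+1)+\sum_{i:\bar a_i\in E(\Gamma)}b_i$. Costs: $\tilde A=\binom{A}{I}$, $d=\binom{b}{0}$, $v$ = last column of $\tilde A$; for $x^*\in Q(A,b)$: $s^*=\tilde Ax^*-d$, $\mu=\lceil\mathbf{1}^Tx^*\rceil-\mathbf{1}^Tx^*$, $c^+(x^* )=\mu(s^*-(1-\mu)v)$, $c^-(x^* )=(1-\mu)(s^*+\mu v)$. In $D(A,x^* )$ arc $a_k$ ($k\in[m+n]$) has cost $c^+_k(x^* )$ and $\bar a_k$ has cost $c^-_k(x^* )$; the cost of a circuit is the sum of its arc costs. *)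

(* Defs.v *)
From mathcomp Require Import all_boot all_order all_algebra.
From mathcomp Require Import reals.
Set Implicit Arguments. Unset Strict Implicit. Unset Printing Implicit Defensive.
Import Order.TTheory GRing.Theory Num.Theory.
Local Open Scope ring_scope.

(* Columns of A are indexed by c : 'I_n, standing for the
   paper's column j = c+1 in [n].  Nodes of D(A) are labels mod n, represented
   by the canonical integer representative in [0,n).  A circular matrix is
   given by its data ell_i in [n], k_i (2 <= k_i <= n-1); row i is the
   incidence vector of [ell_i, ell_i + k_i)_n. *)

Section CircularDefs.
Variables (m n : nat) (ell k : 'I_m -> nat).

Definition circular : Prop :=
  forall i : 'I_m, (1 <= ell i <= n)%N /\ (2 <= k i <= n.-1)%N.

Definition in_row (i : 'I_m) (j : nat) : bool :=
  (((j%:Z - (ell i)%:Z) %% n%:Z)%Z < (k i)%:Z).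

Definition circA (R : nzRingType) : 'M[R]_(m, n) :=
  \matrix_(i < m, c < n) (in_row i c.+1)%:R.

(* arcs of D(A): (inl i, dir) is a_i / bar a_i, (inr c, dir) is a_{m+j} /
   bar a_{m+j} with j = c+1; dir = true means forward arc. *)
Definition darc := (('I_m + 'I_n) * bool)%type.

Definition node (z : int) : int := (z %% n%:Z)%Z.

Definition base_tail (e : 'I_m + 'I_n) : int :=
  match e with inl i => (ell i)%:Z - 1 | inr c => (nat_of_ord c)%:Z end.
Definition base_len (e : 'I_m + 'I_n) : int :=
  match e with inl i => (k i)%:Z | inr _ => 1 end.

Definition arc_tail (a : darc) : int :=
  if a.2 then node (base_tail a.1) else node (base_tail a.1 + base_len a.1).
Definition arc_head (a : darc) : int :=
  if a.2 then node (base_tail a.1 + base_len a.1) else node (base_tail a.1).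
Definition arc_len (a : darc) : int :=
  if a.2 then base_len a.1 else - base_len a.1.

Definition jumps (a : darc) (c : 'I_n) : bool :=
  match a.1 with inl i => in_row i c.+1 | inr c' => c' == c end.

Definition is_circuit (s : seq darc) : bool :=
  [&& s != [::], uniq (map arc_tail s) &
      cycle (fun a a' => arc_head a == arc_tail a') s].

(* winding number: p(Gamma) * n = sum of arc lengths *)
Definition winding (s : seq darc) : int := ((\sum_(a <- s) arc_len a) %/ n%:Z)%Z.

Definition arc_b (b : 'I_m -> nat) (a : darc) : int :=
  match a.1 with inl i => (b i)%:Z | inr _ => 0 end.

Definition t_val (b : 'I_m -> nat) (s : seq darc) : int :=
  \sum_(a <- s | a.2) arc_b b a - \sum_(a <- s | ~~ a.2) arc_b b a.

Definition rev_b (b : 'I_m -> nat) (s : seq darc) : int :=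
  \sum_(a <- s | ~~ a.2) arc_b b a.

Definition pminus (s : seq darc) (c : 'I_n) : nat :=
  count (fun a : darc => ~~ a.2 && jumps a c) s.

Definition gamma_beta (b : 'I_m -> nat) (s : seq darc) : int :=
  Num.floor ((t_val b s)%:~R / (winding s)%:~R : rat).
Definition gamma_r (b : 'I_m -> nat) (s : seq darc) : int :=
  t_val b s - gamma_beta b s * winding s.

Definition gamma_violated (R : realType) (b : 'I_m -> nat) (s : seq darc)
    (x : 'I_n -> R) : Prop :=
  \sum_(c < n) ((pminus s c)%:R + (gamma_r b s)%:~R) * x c <
  (gamma_r b s * (gamma_beta b s + 1))%:~R + (rev_b b s)%:~R.

Section Poly.
Variable R : realType.
Variable b : 'I_m -> nat.

Definition inQ (x : 'I_n -> R) : Prop :=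
  (forall c, 0 <= x c) /\
  (forall i, (b i)%:R <= \sum_(c < n) circA R i c * x c).

Definition inQstar (x : 'I_n -> R) : Prop :=
  exists (p : nat) (pts : 'I_p -> 'I_n -> R) (w : 'I_p -> R),
    [/\ forall t, inQ (pts t) /\ (forall c, pts t c \is a Num.int),
        forall t, 0 <= w t,
        \sum_(t < p) w t = 1 &
        forall c, x c = \sum_(t < p) w t * pts t c].

(* slack s^* = A~ x - d, last column v of A~, costs c^+ and c^- *)
Definition slack (x : 'I_n -> R) (e : 'I_m + 'I_n) : R :=
  match e with
  | inl i => \sum_(c < n) circA R i c * x c - (b i)%:R
  | inr c => x c end.
Definition vlast (e : 'I_m + 'I_n) : R :=
  match e with
  | inl i => (in_row i n)%:R
  | inr c => ((nat_of_ord c).+1 == n)%:R end.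
Definition mu (x : 'I_n -> R) : R :=
  (Num.ceil (\sum_(c < n) x c))%:~R - \sum_(c < n) x c.
Definition cplus (x : 'I_n -> R) (e : 'I_m + 'I_n) : R :=
  mu x * (slack x e - (1 - mu x) * vlast e).
Definition cminus (x : 'I_n -> R) (e : 'I_m + 'I_n) : R :=
  (1 - mu x) * (slack x e + mu x * vlast e).
Definition arc_cost (x : 'I_n -> R) (a : darc) : R :=
  if a.2 then cplus x a.1 else cminus x a.1.
Definition circuit_cost (x : 'I_n -> R) (s : seq darc) : R :=
  \sum_(a <- s) arc_cost x a.
End Poly.
End CircularDefs.

(* Main.v *)
Require Import Defs.
From mathcomp Require Import all_boot all_order all_algebra.
From mathcomp Require Import reals.
From mathcomp Require Import zify ring lra.
Import Order.TTheory GRing.Theory Num.Theory.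
Local Open Scope ring_scope.

Lemma divz_eq_q (q r d : int) : 0 < d -> 0 <= r < d -> ((q * d + r) %/ d)%Z = q.
Proof.
move=> d0 hr; rewrite divzMDl ?gt_eqF // divz_small ?addr0 //.
lia.
Qed.

Lemma count_lem (n T L y : int) : 0 < n -> 0 <= L <= n ->
  ((T + L - y) %/ n)%Z - ((T - y) %/ n)%Z =
  if ((y - T - 1) %% n)%Z < L then 1 else 0.
Proof.
move=> n0 /andP[L0 Ln].
set d := y - T - 1.
have hd := divz_eq d n.
have h0 := modz_ge0 d (lt0r_neq0 n0).
have h1 := ltz_mod d (lt0r_neq0 n0). rewrite gtr0_norm // in h1.
set q := (d %/ n)%Z in hd. set rho := (d %% n)%Z in hd h0 h1 *.
have e1 : T - y = (-q - 1) * n + (n - 1 - rho) by rewrite /d in hd; lia.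
rewrite e1 divz_eq_q //; last by apply/andP; split; lia.
case: ifP => hr.
  have e2 : T + L - y = (-q) * n + (L - 1 - rho) by rewrite /d in hd; lia.
  rewrite e2 divz_eq_q //; last by apply/andP; split; lia.
  lia.
have e2 : T + L - y = (-q - 1) * n + (n + L - 1 - rho) by rewrite /d in hd; lia.
rewrite e2 divz_eq_q //; last by apply/andP; split; lia.
lia.
Qed.
Lemma cycle_sum (T U : eqType) (h : U -> int) (F G : T -> U) (s : seq T) :
  cycle (fun a a' => F a == G a') s -> \sum_(a <- s) h (F a) = \sum_(a <- s) h (G a).
Proof.
case: s => [|x s]; first by rewrite !big_nil.
have H : forall y p, path (fun a a' => F a == G a') y p ->
   \sum_(a <- belast y p) h (F a) = \sum_(a <- p) h (G a).
  move=> y p; elim: p y => [|z p IH] y /=; first by rewrite !big_nil.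
  by move=> /andP[/eqP e hp]; rewrite !big_cons e IH.
move=> hc; have := H x (rcons s x) hc; rewrite belast_rcons big_rcons /= => ->.
by rewrite big_cons addrC.
Qed.

Section Arcs.
Variables (m n : nat) (ell k : 'I_m -> nat).
Hypothesis Hcirc : circular n ell k.
Hypothesis n0 : (0 < n)%N.

Lemma n0z : (0 : int) < n%:Z. Proof. by rewrite ltz_nat. Qed.
Lemma nn0z : (n%:Z != 0 :> int). Proof. by rewrite lt0r_neq0 // n0z. Qed.

Lemma shift_mod (T B y : int) : (T %% n)%Z = (B %% n)%Z ->
  ((y - T - 1) %% n)%Z = ((y - B - 1) %% n)%Z.
Proof.
move=> e.
have hT := divz_eq T n. have hB := divz_eq B n.
have -> : y - T - 1 = ((B %/ n)%Z - (T %/ n)%Z) * n + (y - B - 1).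
  rewrite e in hT. lia.
exact: modzMDl.
Qed.

Lemma len_bounds (e : 'I_m + 'I_n) : 0 <= base_len k e <= n%:Z.
Proof.
case: e => [i|c] /=; last by lia.
have [_ /andP[h1 h2]] := Hcirc i. lia.
Qed.

Lemma jumps_mod (a : darc m n) (c : 'I_n) :
  jumps ell k a c = (((c%:Z - base_tail ell a.1) %% n)%Z < base_len k a.1).
Proof.
case: a => [[i|c'] d] /=; rewrite /jumps /=.
  have [/andP[h1 h2] _] := Hcirc i.
  rewrite /in_row.
  by have -> : (c%:Z - ((ell i)%:Z - 1)) = (c.+1)%:Z - (ell i)%:Z by lia.
have hc := ltn_ord c. have hc' := ltn_ord c'.
case: (leP (c' : int) (c : int)) => h.
  rewrite modz_small; last by lia.
  apply/eqP/idP => [->|]; first by lia.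
  move=> h'; apply/val_inj => /=; lia.
have -> : (c%:Z - c'%:Z) = (-1) * n%:Z + (c%:Z - c'%:Z + n%:Z) by ring.
rewrite modzMDl modz_small; last by lia.
apply/eqP/idP => [e|]; last by lia.
by move: h; rewrite e; lia.
Qed.

Definition fz (c : 'I_n) (z : int) : int := ((z - (c.+1)%:Z) %/ n)%Z.
Definition sj (a : darc m n) (c : 'I_n) : int :=
  if a.2 then (jumps ell k a c)%:Z else - (jumps ell k a c)%:Z.

Lemma bool_int (b : bool) : (b : nat)%:Z = if b then 1 else 0.
Proof. by case: b. Qed.

Lemma sj_eq a c : sj a c =
  fz c (arc_tail ell k a + arc_len k a) - fz c (arc_tail ell k a).
Proof.
rewrite /sj /fz jumps_mod.
have hL := len_bounds a.1.
move: hL; case: a => [e []] hL; rewrite /arc_tail /arc_len /node /=.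
  rewrite count_lem ?n0z //.
  rewrite (@shift_mod _ (base_tail ell e)) ?modz_mod //.
  rewrite bool_int.
  by have -> : (c.+1)%:Z - base_tail ell e - 1 = c%:Z - base_tail ell e by lia.
set T := ((base_tail ell e + base_len k e) %% n)%Z.
have -> : T = (T - base_len k e) + base_len k e by ring.
rewrite addrK.
have := count_lem n (T - base_len k e) (base_len k e) (c.+1)%:Z n0z hL.
rewrite (@shift_mod _ (base_tail ell e)); last first.
  by rewrite /T modzDml addrK.
have -> : (c.+1)%:Z - base_tail ell e - 1 = c%:Z - base_tail ell e by lia.
rewrite bool_int => <-. ring.
Qed.

Lemma head_eq (a : darc m n) : arc_head ell k a = ((arc_tail ell k a + arc_len k a) %% n)%Z.
Proof.
case: a => [e []]; rewrite /arc_tail /arc_head /arc_len /node /=.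
  by rewrite modzDml.
by rewrite modzDml addrK.
Qed.

Lemma sum_sj (s : seq (darc m n)) (c : 'I_n) :
  cycle (fun a a' => arc_head ell k a == arc_tail ell k a') s ->
  \sum_(a <- s) sj a c = winding k s.
Proof.
move=> hc.
pose q (a : darc m n) := ((arc_tail ell k a + arc_len k a) %/ n)%Z.
have hq a : arc_tail ell k a + arc_len k a = q a * n + arc_head ell k a.
  by rewrite head_eq /q -divz_eq.
have hs a : sj a c = q a + (fz c (arc_head ell k a) - fz c (arc_tail ell k a)).
  rewrite sj_eq hq /fz.
  rewrite -addrA divzMDl ?nn0z //. ring.
have hh := @cycle_sum _ _ (fz c) _ _ _ hc.
rewrite (eq_bigr _ (fun a _ => hs a)) big_split /= sumrB hh subrr addr0.
rewrite /winding.
rewrite [X in (X %/ _)%Z](eq_bigr (fun a => q a * n + (arc_head ell k a - arc_tail ell k a))); last first.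
  move=> a _; have := hq a; move: (q a * n%:Z) => Q. lia.
rewrite big_split sumrB /= -mulr_suml (@cycle_sum _ _ id _ _ _ hc) subrr addr0.
by rewrite mulzK ?nn0z.
Qed.
End Arcs.
Arguments sj {m n} ell k a c.
Arguments sum_sj {m n ell k} Hcirc n0 s c _.
Lemma floor_rem (t p : int) :
  let be := Num.floor (t%:~R / p%:~R : rat) in
  ((0 < p)%R -> 0 <= t - be * p < p) /\ ((p < 0)%R -> p < t - be * p <= 0).
Proof.
move=> be; have /andP[h1 h2] := floor_itv (t%:~R / p%:~R : rat).
split => hp.
  have hp' : (0 : rat) < p%:~R by rewrite ltr0z.
  rewrite ler_pdivlMr // -intrM ler_int in h1.
  rewrite ltr_pdivrMr // -intrM ltr_int in h2.
  rewrite -/be in h1 h2. apply/andP; split; nia.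
have hp' : p%:~R < (0 : rat) by rewrite ltrz0.
rewrite ler_ndivlMr // -intrM ler_int in h1.
rewrite ltr_ndivrMr // -intrM ltr_int in h2.
rewrite -/be in h1 h2. apply/andP; split; nia.
Qed.

Lemma sign_sum (T : Type) (V : zmodType) (s : seq T) (P : pred T) (G : T -> V) :
  \sum_(a <- s) (if P a then G a else - G a) =
  \sum_(a <- s | P a) G a - \sum_(a <- s | ~~ P a) G a.
Proof.
rewrite (bigID P) /= -sumrN; congr (_ + _); apply: eq_bigr => a.
  by move=> ->.
by move=> /negbTE ->.
Qed.

Section Real.
Variables (R : realType) (m n : nat) (ell k : 'I_m -> nat) (b : 'I_m -> nat).
Variable (x : 'I_n -> R).

Lemma slack_eq (a : darc m n) : slack ell k b x a.1 =
  \sum_(c < n) (jumps ell k a c)%:R * x c - (arc_b b a)%:~R.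
Proof.
case: a => [[i|c'] d]; rewrite /slack /jumps /arc_b /=.
  congr (_ - _).
  by apply: eq_bigr => c _; rewrite mxE.
rewrite subr0 (bigD1 c') //= eqxx mul1r big1 ?addr0 // => c /negbTE.
by rewrite eq_sym => ->; rewrite mul0r.
Qed.

Lemma vlast_eq (c0 : 'I_n) (hc0 : c0.+1 = n) (a : darc m n) :
  vlast ell k R a.1 = (jumps ell k a c0)%:R.
Proof.
case: a => [[i|c'] d]; rewrite /vlast /jumps /=; first by rewrite hc0.
have -> : (c'.+1 == n) = (c'.+1 == c0.+1) by rewrite hc0.
by rewrite eqSS.
Qed.

Lemma count_R (s : seq (darc m n)) (c : 'I_n) :
  ((pminus ell k s c)%:R : R) = \sum_(a <- s | ~~ a.2) (jumps ell k a c)%:R.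
Proof.
rewrite /pminus; elim: s => [|a s IH]; first by rewrite big_nil.
rewrite big_cons /= natrD IH; case: a.2 => /=; first by rewrite add0r.
by case: jumps.
Qed.
End Real.
Arguments slack_eq {R m n ell k b x} a.
Arguments vlast_eq {R m n ell k} c0 hc0 a.
Arguments count_R {R m n ell k} s c.
Arguments sign_sum {T V} s P G.
Lemma arith (R : realType) (p K : int) (X mu Sr Sf Vr Vf t r be N : R) :
  0 <= mu < 1 -> X = N - mu -> Sf - Sr = p%:~R * X - t -> Vf - Vr = p%:~R ->
  0 <= Sr -> 0 <= Sf ->
  mu * (Sf - (1 - mu) * Vf) + (1 - mu) * (Sr + mu * Vr) < 0 ->
  t = be * p%:~R + r -> K%:~R = N - 1 - be ->
  ((0 < p)%R -> 0 <= r < p%:~R) -> ((p < 0)%R -> p%:~R < r <= 0) ->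
  p != 0 /\ Sr + r * (X - (be + 1)) < 0.
Proof.
move=> /andP[m0 m1] hX hS hV hSr hSf hC ht hK hp hn.
have eC : mu * (Sf - (1 - mu) * Vf) + (1 - mu) * (Sr + mu * Vr)
   = Sr + mu * (p%:~R * K%:~R - r).
  have -> : mu * (Sf - (1 - mu) * Vf) + (1 - mu) * (Sr + mu * Vr) =
    mu * (Sf - Sr) + Sr - mu * (1 - mu) * (Vf - Vr) by ring.
  rewrite hS hV hK hX ht. ring.
have eF : Sf = Sr + p%:~R * (K%:~R + 1 - mu) - r.
  have -> : Sf = (Sf - Sr) + Sr by ring.
  rewrite hS hK hX ht. ring.
rewrite eC in hC.
have eG : Sr + r * (X - (be + 1)) = Sr + r * (K%:~R - mu).
  by rewrite hK hX; ring.
rewrite eG.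
case: (ltgtP p 0) => hp0.
- have [hr1 hr2] : p%:~R < r /\ r <= 0 :> R by move/andP: (hn hp0).
  have hp1 : p%:~R <= -1 :> R by rewrite -mulrN1z ler_int; lia. 
  exfalso.
  case: (lerP K 0) => hK0.
    have hK1 : K%:~R <= 0 :> R by rewrite -(ler_int R) in hK0.
    have H1 : 0 <= p%:~R * K%:~R :> R by nra.
    have H2 : 0 <= mu * (p%:~R * K%:~R - r) by apply: mulr_ge0 => //; lra.
    lra.
  have hK1 : 1 <= K%:~R :> R by rewrite ler1z.
  have H3 : 0 <= (1 - mu) * (r - p%:~R * (K%:~R + 1)) by apply: mulr_ge0; [lra | nra].
  have H4 : Sr + mu * (p%:~R * K%:~R - r) = Sf + (1 - mu) * (r - p%:~R * (K%:~R + 1)).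
    rewrite eF; ring.
  lra.
- have [hr1 hr2] : 0 <= r /\ r < p%:~R :> R by move/andP: (hp hp0).
  split; first by move: hp0; lia.
  have hp1 : 1 <= p%:~R :> R by rewrite ler1z.
  case: (ltgtP K 0) => hK0.
  + exfalso.
    have hK1 : K%:~R <= -1 :> R by rewrite -mulrN1z ler_int; lia.
    have H5 : 0 <= (1 - mu) * (r - p%:~R * (K%:~R + 1)) by apply: mulr_ge0; [lra | nra].
    have H6 : Sr + mu * (p%:~R * K%:~R - r) = Sf + (1 - mu) * (r - p%:~R * (K%:~R + 1)).
      rewrite eF; ring.
    lra.
  + exfalso.
    have hK1 : 1 <= K%:~R :> R by rewrite ler1z.
    have H7 : p%:~R <= p%:~R * K%:~R :> R by nra.
    have H8 : 0 <= mu * (p%:~R * K%:~R - r) by apply: mulr_ge0 => //; lra.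
    lra.
  + rewrite hK0 /= in hC *. lra.
- exfalso. have e0 : (p%:~R : R) = 0 by rewrite hp0.
  rewrite e0 mul0r sub0r in hC. rewrite e0 mul0r addr0 in eF.
  have H9 : 0 <= mu * (Sr - r) by apply: mulr_ge0; lra.
  have H10 : 0 <= (1 - mu) * Sr by apply: mulr_ge0; lra.
  have H11 : Sr + mu * - r = mu * (Sr - r) + (1 - mu) * Sr by ring.
  lra.
Qed.

Arguments arith {R p K X mu Sr Sf Vr Vf t r be N}.

Theorem lemma4p7 (R : realType) (m n : nat) (ell k : 'I_m -> nat)
  (Hcirc : circular n ell k) (b : 'I_m -> nat) (x : 'I_n -> R)
  (HQ : inQ ell k b x) (HnQ : ~ inQstar ell k b x)
  (s : seq (darc m n)) (Hs : is_circuit ell k s)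
  (Hneg : circuit_cost ell k b x s < 0) :
  winding k s != 0 /\ gamma_violated ell k b s x.
Proof.
move: Hs => /and3P[sne _ hcyc].
have n0 : (0 < n)%N.
  case: s sne {hcyc Hneg} => [|[[i|c] d] s] // _.
    by have [/andP[h1 h2] _] := Hcirc i; apply: leq_trans h2.
  exact: leq_ltn_trans (leq0n c) (ltn_ord c).
have hlt : (n.-1 < n)%N by rewrite ltn_predL.
pose c0 : 'I_n := Ordinal hlt.
have hc0 : c0.+1 = n by rewrite /= prednK.
case: HQ => hx hA.
have slack_ge0 (e : 'I_m + 'I_n) : 0 <= slack ell k b x e.
  case: e => [i|c] /=; last exact: hx.
  by rewrite subr_ge0.
set X := \sum_(c < n) x c.
set Sr := \sum_(a <- s | ~~ a.2) slack ell k b x a.1.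
set Sf := \sum_(a <- s | a.2) slack ell k b x a.1.
set Vr := \sum_(a <- s | ~~ a.2) vlast ell k R a.1.
set Vf := \sum_(a <- s | a.2) vlast ell k R a.1.
set p := winding k s.
set be := gamma_beta k b s.
set r := gamma_r k b s.
set t := t_val b s.
have sumsj c : \sum_(a <- s) ((sj ell k a c)%:~R : R) = p%:~R.
  by rewrite -rmorph_sum /= (sum_sj Hcirc n0 s c hcyc).
have hS : Sf - Sr = p%:~R * X - t%:~R.
  rewrite /Sf /Sr -(sign_sum s (fun a : darc m n => a.2)).
  rewrite (eq_bigr (fun a => \sum_(c < n) (sj ell k a c)%:~R * x c
                 - (if a.2 then arc_b b a else - arc_b b a)%:~R)); last first.
    move=> a _; rewrite slack_eq /sj; case: a.2 => /=.
      by apply: congr2 => //; apply: eq_bigr => c _.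
    rewrite opprB rmorphN /= opprK addrC -sumrN; congr (_ + _).
    by apply: eq_bigr => c _; rewrite rmorphN mulNr.
  rewrite sumrB exchange_big /= -rmorph_sum /= sign_sum.
  rewrite /t /t_val; apply: (congr1 (fun z => z - _)).
  rewrite /X mulr_sumr; apply: eq_bigr => c _.
  by rewrite -mulr_suml sumsj.
have hV : Vf - Vr = p%:~R.
  rewrite /Vf /Vr -(sign_sum s (fun a : darc m n => a.2)) -(sumsj c0).
  apply: eq_bigr => a _; rewrite (vlast_eq c0 hc0) /sj; case: a.2 => //=.
  by rewrite rmorphN.
have hSr0 : 0 <= Sr by apply: sumr_ge0 => a _.
have hSf0 : 0 <= Sf by apply: sumr_ge0 => a _.
have hC : mu x * (Sf - (1 - mu x) * Vf) + (1 - mu x) * (Sr + mu x * Vr) < 0.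
  move: Hneg; rewrite /circuit_cost (bigID (fun a : darc m n => a.2)) /=.
  congr (_ < _); congr (_ + _).
    rewrite /Sf /Vf mulr_sumr -sumrB mulr_sumr; apply: eq_bigr => a ha.
    by rewrite /arc_cost ha /cplus.
  rewrite /Sr /Vr mulr_sumr -big_split mulr_sumr; apply: eq_bigr => a ha.
  by rewrite /arc_cost (negbTE ha) /cminus.
have hmu : 0 <= mu x < 1.
  have /andP[h1 h2] := ceil_itv X.
  rewrite /mu -/X intrB in h1 *.
  apply/andP; split; lra.
have hX : X = (Num.ceil X)%:~R - mu x by rewrite /mu -/X; ring.
have ht : (t%:~R : R) = be%:~R * p%:~R + r%:~R.
  by rewrite /r /gamma_r -/t -/be -/p -intrM -intrD; congr (_%:~R); ring.
have hK : ((Num.ceil X - 1 - be)%:~R : R) = (Num.ceil X)%:~R - 1 - be%:~R.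
  by rewrite !intrB.
have [hfp hfn] := floor_rem t p.
have hp : (0 < p)%R -> 0 <= (r%:~R : R) < (p%:~R : R).
  by move=> h; rewrite ler0z ltr_int; exact: hfp h.
have hn : (p < 0)%R -> (p%:~R : R) < (r%:~R : R) <= 0.
  by move=> h; rewrite ltr_int lerz0; exact: hfn h.
have [pn0 hg] := arith hmu hX hS hV hSr0 hSf0 hC ht hK hp hn.
split => //.
rewrite /gamma_violated -/r -/be.
have eSr : Sr = \sum_(c < n) (pminus ell k s c)%:R * x c - (rev_b b s)%:~R.
  rewrite /Sr (eq_bigr _ (fun a _ => slack_eq a)) sumrB.
  congr (_ - _); last by rewrite /rev_b rmorph_sum.
  rewrite exchange_big /=; apply: eq_bigr => c _.
  by rewrite count_R mulr_suml.
have -> : \sum_(c < n) ((pminus ell k s c)%:R + r%:~R) * x c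
   = Sr + (rev_b b s)%:~R + r%:~R * X.
  rewrite eSr subrK /X mulr_sumr -big_split; apply: eq_bigr => c _.
  by rewrite mulrDl.
rewrite intrM intrD /=.
lra.
Qed.
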